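(* Let $A$ and $B$ be nonempty closed subsets of a complete metric space $(X,\rho)$ such that the ordered pair $(A,B)$ has the $BUC$ property. Let $T:A\cup B\to A\cup B$ be a cyclic map and suppose there exists $k\in(0,1)$ such that $$\rho(Tx,Ty)\le k\,\rho(x,y)+(1-k)\,\mathrm{dist}(A,B)\quad\text{for all }x\in A,\ y\in B.$$ Then $T$ has a unique best proximity point $x$ in $A$, and for every $x_0\in A$ the sequence $\{T^{2n}x_0\}_{n=1}^\infty$ converges to $x$. Moreover $T$ has at least one best proximity point in $B$, and if the ordered pair $(B,A)$ also has the $BUC$ property, then the best proximity point of $T$ in $B$ is unique.
   Context: $\mathrm{dist}(A,B)=\inf\{\rho(a,b):a\in A,\ b\in B\}$. A map $T:A\cup B\to A\cup B$ is cyclic if $T(A)\subseteq B$ and $T(B)\subseteq A$. A point $x\in A$ (resp. $x\in B$) is a best proximity point of $T$ in $A$ (resp. in $B$) if $\rho(x,Tx)=\mathrm{dist}(A,B)$. The ordered pair $(A,B)$ has the bounded $UC$ property ($BUC$) if for all bounded sequences $\{x_n\},\{z_n\}\subset A$ and every sequence $\{y_n\}\subset B$ with $\lim_n\rho(x_n,y_n)=\lim_n\rho(z_n,y_n)=\mathrm{dist}(A,B)$ one has $\lim_n\rho(x_n,z_n)=0$; the property for $(B,A)$ is defined with the roles of $A$ and $B$ interchanged. *)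

(* Defs.v *)
From Stdlib Require Import Reals.
From Coquelicot Require Import Coquelicot.
Open Scope R_scope.

Definition is_metric {X : Type} (rho : X -> X -> R) : Prop :=
  (forall x y, 0 <= rho x y) /\
  (forall x y, rho x y = 0 <-> x = y) /\
  (forall x y, rho x y = rho y x) /\
  (forall x y z, rho x z <= rho x y + rho y z).

Definition converges_to {X : Type} (rho : X -> X -> R) (u : nat -> X) (x : X) : Prop :=
  forall eps, 0 < eps -> exists N, forall n, (N <= n)%nat -> rho (u n) x < eps.

Definition cauchy_seq {X : Type} (rho : X -> X -> R) (u : nat -> X) : Prop :=
  forall eps, 0 < eps -> exists N, forall n m, (N <= n)%nat -> (N <= m)%nat ->
    rho (u n) (u m) < eps.

Definition complete_metric {X : Type} (rho : X -> X -> R) : Prop :=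
  forall u, cauchy_seq rho u -> exists x, converges_to rho u x.

Definition closed_in {X : Type} (rho : X -> X -> R) (A : X -> Prop) : Prop :=
  forall u x, (forall n, A (u n)) -> converges_to rho u x -> A x.

Definition nonempty {X : Type} (A : X -> Prop) : Prop := exists x, A x.

Definition bounded_sq {X : Type} (rho : X -> X -> R) (u : nat -> X) : Prop :=
  exists M, forall n m, rho (u n) (u m) <= M.

Definition distAB {X : Type} (rho : X -> X -> R) (A B : X -> Prop) : R :=
  real (Glb_Rbar (fun r => exists a b, A a /\ B b /\ r = rho a b)).

Definition cyclic_map {X : Type} (A B : X -> Prop) (T : X -> X) : Prop :=
  (forall x, A x -> B (T x)) /\ (forall x, B x -> A (T x)).

Definition best_prox_point {X : Type} (rho : X -> X -> R) (A B : X -> Prop)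
  (T : X -> X) (x : X) : Prop :=
  rho x (T x) = distAB rho A B.

Definition BUC {X : Type} (rho : X -> X -> R) (A B : X -> Prop) : Prop :=
  forall (x z y : nat -> X),
    (forall n, A (x n)) -> (forall n, A (z n)) -> (forall n, B (y n)) ->
    bounded_sq rho x -> bounded_sq rho z ->
    is_lim_seq (fun n => rho (x n) (y n)) (distAB rho A B) ->
    is_lim_seq (fun n => rho (z n) (y n)) (distAB rho A B) ->
    is_lim_seq (fun n => rho (x n) (z n)) 0.

(* Main.v *)
Require Import Defs.
From Stdlib Require Import Reals Lra Lia Psatz Arith Classical ClassicalEpsilon.
From Coquelicot Require Import Coquelicot.
Open Scope R_scope.

Lemma distAB_props {X : Type} (rho : X -> X -> R) (A B : X -> Prop) :
  is_metric rho -> nonempty A -> nonempty B ->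
  0 <= distAB rho A B /\ (forall a b, A a -> B b -> distAB rho A B <= rho a b).
Proof.
  intros [H0 _] [a0 Ha0] [b0 Hb0].
  unfold distAB.
  destruct (Glb_Rbar_correct (fun r => exists a b, A a /\ B b /\ r = rho a b)) as [Hlb Hgr].
  assert (Hle : Rbar_le (Glb_Rbar (fun r => exists a b, A a /\ B b /\ r = rho a b)) (rho a0 b0)).
  { apply Hlb. exists a0, b0. auto. }
  assert (Hge : Rbar_le 0 (Glb_Rbar (fun r => exists a b, A a /\ B b /\ r = rho a b))).
  { apply Hgr. intros r [a [b [Ha [Hb ->]]]]. simpl. apply H0. }
  destruct (Glb_Rbar _) as [g| |] eqn:E; simpl in *; try contradiction.
  split; auto. intros a b Ha Hb.
  assert (H := Hlb (rho a b) (ex_intro _ a (ex_intro _ b (conj Ha (conj Hb eq_refl))))).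
  simpl in H. exact H.
Qed.

Lemma distAB_sym {X : Type} (rho : X -> X -> R) (A B : X -> Prop) :
  is_metric rho -> distAB rho B A = distAB rho A B.
Proof.
  intros [_ [_ [Hs _]]]. unfold distAB. f_equal. apply Glb_Rbar_eqset.
  intros r; split; intros [a [b [Ha [Hb ->]]]]; exists b, a; rewrite Hs; auto.
Qed.

Lemma lim_eps (u : nat -> R) (l : R) :
  is_lim_seq u l <-> (forall eps, 0 < eps -> exists N, forall n, (N <= n)%nat -> Rabs (u n - l) < eps).
Proof.
  rewrite <- is_lim_seq_spec. simpl. split.
  - intros H eps He. destruct (H (mkposreal eps He)) as [N HN]. exists N. exact HN.
  - intros H eps. destruct (H eps (cond_pos eps)) as [N HN]. exists N. exact HN.
Qed.

Lemma pow_small (k K : R) : 0 <= k < 1 -> forall eps, 0 < eps ->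
  exists N, forall n, (N <= n)%nat -> k ^ n * K < eps.
Proof.
  intros Hk eps He.
  destruct (Rle_lt_dec K 0) as [HK|HK].
  - exists 0%nat. intros n _. assert (0 <= k ^ n) by (apply pow_le; lra). nra.
  - assert (Hab : Rabs k < 1) by (rewrite Rabs_right; lra).
    destruct (pow_lt_1_zero k Hab (eps / K)) as [N HN].
    { apply Rdiv_lt_0_compat; lra. }
    exists N. intros n Hn. specialize (HN n Hn).
    assert (0 <= k ^ n) by (apply pow_le; lra).
    rewrite Rabs_right in HN by lra.
    apply (Rmult_lt_compat_r K) in HN; [|lra].
    unfold Rdiv in HN. rewrite Rmult_assoc, Rinv_l in HN by lra. lra.
Qed.

Lemma pow_anti (k : R) (m n : nat) : 0 <= k <= 1 -> (m <= n)%nat -> k ^ n <= k ^ m.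
Proof.
  intros Hk Hmn. induction Hmn; [lra|].
  simpl. assert (0 <= k ^ m0) by (apply pow_le; lra). nra.
Qed.
Lemma const_bounded {X : Type} (rho : X -> X -> R) (p : X) : bounded_sq rho (fun _ => p).
Proof. exists (rho p p). intros; lra. Qed.

Lemma lim_const_zero (c : R) : 0 <= c -> is_lim_seq (fun _ : nat => c) 0 -> c = 0.
Proof.
  intros Hc H. rewrite lim_eps in H. destruct (Req_dec c 0) as [|Hne]; auto.
  destruct (H c ltac:(lra)) as [N HN]. specialize (HN N (le_n _)).
  rewrite Rminus_0_r, Rabs_right in HN; lra.
Qed.

Lemma fix_lemma {X : Type} (rho : X -> X -> R) (U V : X -> Prop) (T : X -> X) (k : R) :
  is_metric rho ->
  (forall u v, U u -> V v -> distAB rho U V <= rho u v) ->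
  (forall u, U u -> V (T u)) -> (forall v, V v -> U (T v)) ->
  0 < k < 1 ->
  (forall u v, U u -> V v -> rho (T u) (T v) <= k * rho u v + (1 - k) * distAB rho U V) ->
  BUC rho U V ->
  forall p, U p -> rho p (T p) = distAB rho U V -> T (T p) = p.
Proof.
  intros Hmet Hd HUV HVU Hk Hc Hbuc.
  destruct Hmet as [H0 [Heq [Hs Htr]]].
  set (d := distAB rho U V) in *.
 intros p Hp Hpd.
    assert (E : rho (T (T p)) (T p) = d).
    { apply Rle_antisym.
      - rewrite Hs. specialize (Hc p (T p) Hp (HUV p Hp)). rewrite Hpd in Hc. lra.
      - apply Hd; auto. }
    assert (Hz := Hbuc (fun _ => p) (fun _ => T (T p)) (fun _ => T p)
       (fun _ => Hp) (fun _ => HVU _ (HUV _ Hp)) (fun _ => HUV _ Hp)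
       (const_bounded _ _) (const_bounded _ _)).
    simpl in Hz. rewrite Hpd, E in Hz.
    specialize (Hz (is_lim_seq_const _) (is_lim_seq_const _)).
    apply lim_const_zero in Hz; auto. symmetry. apply Heq. exact Hz.
Qed.


Lemma uniq_lemma {X : Type} (rho : X -> X -> R) (U V : X -> Prop) (T : X -> X) (k : R) :
  is_metric rho ->
  (forall u v, U u -> V v -> distAB rho U V <= rho u v) ->
  (forall u, U u -> V (T u)) -> (forall v, V v -> U (T v)) ->
  0 < k < 1 ->
  (forall u v, U u -> V v -> rho (T u) (T v) <= k * rho u v + (1 - k) * distAB rho U V) ->
  BUC rho U V ->
  forall p q, U p -> rho p (T p) = distAB rho U V ->
              U q -> rho q (T q) = distAB rho U V -> p = q.
Proof.
  intros Hmet Hd HUV HVU Hk Hc Hbuc.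
  destruct Hmet as [H0 [Heq [Hs Htr]]].
  set (d := distAB rho U V) in *.
  assert (Hfix : forall p, U p -> rho p (T p) = d -> T (T p) = p).
  { intros p Hp Hpd.
    assert (E : rho (T (T p)) (T p) = d).
    { apply Rle_antisym.
      - rewrite Hs. specialize (Hc p (T p) Hp (HUV p Hp)). rewrite Hpd in Hc. lra.
      - apply Hd; auto. }
    assert (Hz := Hbuc (fun _ => p) (fun _ => T (T p)) (fun _ => T p)
       (fun _ => Hp) (fun _ => HVU _ (HUV _ Hp)) (fun _ => HUV _ Hp)
       (const_bounded _ _) (const_bounded _ _)).
    simpl in Hz. rewrite Hpd, E in Hz.
    specialize (Hz (is_lim_seq_const _) (is_lim_seq_const _)).
    apply lim_const_zero in Hz; auto. symmetry. apply Heq. exact Hz. }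
  intros p q Hp Hpd Hq Hqd.
  assert (Fp := Hfix p Hp Hpd). assert (Fq := Hfix q Hq Hqd).
  assert (Ha : rho p (T q) <= k * rho (T p) q + (1 - k) * d).
  { rewrite <- Fp at 1. rewrite Hs. rewrite (Hs (T p) q). apply Hc; auto. }
  assert (Hb : rho (T p) q <= k * rho p (T q) + (1 - k) * d).
  { rewrite <- Fq at 1. apply Hc; auto. }
  assert (Hda := Hd p (T q) Hp (HUV _ Hq)).
  assert (Hdb := Hd q (T p) Hq (HUV _ Hp)). rewrite Hs in Hdb.
  assert (E : rho p (T q) = d) by nra.
  assert (Hz := Hbuc (fun _ => p) (fun _ => q) (fun _ => T q)
       (fun _ => Hp) (fun _ => Hq) (fun _ => HUV _ Hq)
       (const_bounded _ _) (const_bounded _ _)).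
  simpl in Hz. rewrite E, Hqd in Hz.
  specialize (Hz (is_lim_seq_const _) (is_lim_seq_const _)).
  apply lim_const_zero in Hz; auto. apply Heq. exact Hz.
Qed.
Lemma squeeze_lim (u : nat -> R) (d k K : R) : 0 <= k < 1 ->
  (forall N, d <= u N <= d + k ^ N * K) -> is_lim_seq u d.
Proof.
  intros Hk H. apply lim_eps. intros eps He.
  destruct (pow_small k K Hk eps He) as [N HN]. exists N. intros n Hn.
  specialize (HN n Hn). specialize (H n). rewrite Rabs_right; lra.
Qed.

Lemma exist_lemma {X : Type} (rho : X -> X -> R) (A B : X -> Prop) (T : X -> X) (k d : R) :
  is_metric rho -> complete_metric rho -> closed_in rho A ->
  0 <= d -> (forall a b, A a -> B b -> d <= rho a b) ->
  (forall u, A u -> B (T u)) -> (forall v, B v -> A (T v)) ->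
  0 < k < 1 ->
  (forall u v, A u -> B v -> rho (T u) (T v) <= k * rho u v + (1 - k) * d) ->
  (forall (x z y : nat -> X),
    (forall n, A (x n)) -> (forall n, A (z n)) -> (forall n, B (y n)) ->
    bounded_sq rho x -> bounded_sq rho z ->
    is_lim_seq (fun n => rho (x n) (y n)) d ->
    is_lim_seq (fun n => rho (z n) (y n)) d ->
    is_lim_seq (fun n => rho (x n) (z n)) 0) ->
  forall x0, A x0 -> exists p, A p /\ rho p (T p) = d /\
     converges_to rho (fun n => Nat.iter (2 * n) T x0) p.
Proof.
  intros Hmet Hcomp HAcl Hd0 Hd HAB HBA Hk Hc Hbuc x0 Hx0.
  destruct Hmet as [H0 [Heq [Hs Htr]]].
  set (opp := fun u v => (A u /\ B v) \/ (B u /\ A v)).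
  assert (Hc' : forall u v, opp u v -> rho (T u) (T v) <= k * rho u v + (1 - k) * d).
  { intros u v [[Hu Hv]|[Hu Hv]]; [apply Hc; auto|].
    rewrite Hs, (Hs u v). apply Hc; auto. }
  assert (HoT : forall u v, opp u v -> opp (T u) (T v)).
  { intros u v [[Hu Hv]|[Hu Hv]]; [right|left]; auto. }
  assert (Hod : forall u v, opp u v -> d <= rho u v).
  { intros u v [[Hu Hv]|[Hu Hv]]; [apply Hd; auto|]. rewrite Hs. apply Hd; auto. }
  assert (Hiter : forall j u v, opp u v ->
     opp (Nat.iter j T u) (Nat.iter j T v) /\
     rho (Nat.iter j T u) (Nat.iter j T v) - d <= k ^ j * (rho u v - d)).
  { induction j as [|j IH]; intros u v Huv; simpl.
    - split; auto. lra.
    - destruct (IH u v Huv) as [Ho Hr]. split; auto.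
      specialize (Hc' _ _ Ho). nra. }
  set (x := fun n => Nat.iter n T x0).
  assert (Hpar : forall n, A (x (2 * n)%nat) /\ B (x (S (2 * n)))).
  { induction n as [|n [IHa IHb]]; [simpl; auto|].
    replace (2 * S n)%nat with (S (S (2 * n))) by lia.
    split; [apply HBA; exact IHb|apply HAB; apply HBA; exact IHb]. }
  assert (Hox : forall n, opp (x n) (x (S n))).
  { induction n as [|n IH]; [left; simpl; auto|]. apply HoT. exact IH. }
  assert (HxS : forall n m, x (n + m)%nat = Nat.iter n T (x m)).
  { intros n m. unfold x. apply Nat.iter_add. }
  set (C := rho (x 0%nat) (x 1%nat) - d).
  assert (HC : 0 <= C) by (assert (HH := Hod _ _ (Hox 0%nat)); unfold C; lra).
  assert (Hkn : forall n, 0 <= k ^ n <= 1).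
  { intros n. split; [apply pow_le; lra|rewrite <- (pow1 n); apply pow_incr; lra]. }
  assert (Hcons : forall n, d <= rho (x n) (x (S n)) <= d + k ^ n * C).
  { intros n. split; [apply Hod, Hox|].
    replace (S n) with (n + 1)%nat by lia. rewrite HxS.
    replace (x n) with (Nat.iter n T (x 0%nat)) by (rewrite <- HxS; f_equal; lia).
    destruct (Hiter n (x 0%nat) (x 1%nat) (Hox 0%nat)) as [_ Hr]. unfold C. lra. }
  set (c1 := rho (x 1%nat) (x 0%nat)).
  set (M := (2 * d + C + c1) / (1 - k)).
  assert (HM : forall n, rho (x (S (2 * n))) (x 0%nat) <= M).
  { intros n.
    assert (E1 : rho (x (S (S (2 * n)))) (x 1%nat) <= k * rho (x (S (2 * n))) (x 0%nat) + (1 - k) * d).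
    { apply (Hc' (x (S (2 * n))) (x 0%nat)). right. split; [apply Hpar|exact Hx0]. }
    assert (E2 := Htr (x (S (2 * n))) (x (S (S (2 * n)))) (x 0%nat)).
    assert (E3 := Htr (x (S (S (2 * n)))) (x 1%nat) (x 0%nat)).
    destruct (Hcons (S (2 * n))) as [_ E4]. destruct (Hkn (S (2 * n))) as [_ E5].
    fold c1 in E3.
    apply (Rmult_le_reg_l (1 - k)); [lra|].
    unfold M. field_simplify; [|lra]. nra. }
  assert (HMpos : 0 <= M) by (eapply Rle_trans; [apply H0|apply (HM 0%nat)]).
  assert (Hob : forall j n, rho (x (j + S (2 * n))%nat) (x j) <= d + k ^ j * M).
  { intros j n. rewrite HxS.
    replace (x j) with (Nat.iter j T (x 0%nat)) by (rewrite <- HxS; f_equal; lia).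
    assert (Ho : opp (x (S (2 * n))) (x 0%nat)) by (right; split; [apply Hpar|exact Hx0]).
    destruct (Hiter j _ _ Ho) as [_ Hr]. specialize (HM n). specialize (Hkn j). nra. }
  assert (Hgen : forall a b N, (N <= a)%nat -> (N <= b)%nat ->
      d <= rho (x (2 * a)%nat) (x (S (2 * b))) <= d + k ^ N * M).
  { intros a b N Ha Hb. split.
    { apply Hd; apply Hpar. }
    destruct (le_lt_dec a b) as [Hab|Hab].
    - replace (S (2 * b)) with (2 * a + S (2 * (b - a)))%nat by lia.
      rewrite Hs. eapply Rle_trans; [apply Hob|].
      assert (k ^ (2 * a) <= k ^ N) by (apply pow_anti; lia || lra). nra.
    - replace (2 * a)%nat with (S (2 * b) + S (2 * (a - b - 1)))%nat by lia.
      eapply Rle_trans; [apply Hob|].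
      assert (k ^ (S (2 * b)) <= k ^ N) by (apply pow_anti; lia || lra). nra. }
  set (y := fun n => x (2 * n)%nat).
  set (Bd := 2 * (d + C) + 2 * M).
  assert (Hyb : forall n m, rho (y n) (y m) <= Bd).
  { intros n m. unfold y.
    assert (E1 := Htr (x (2 * n)%nat) (x (S (2 * n))) (x (2 * m)%nat)).
    assert (E2 := Htr (x (S (2 * n))) (x 0%nat) (x (2 * m)%nat)).
    assert (E3 := Htr (x 0%nat) (x (S (2 * m))) (x (2 * m)%nat)).
    assert (E4 := HM n). assert (E5 := HM m).
    rewrite (Hs (x 0%nat) (x (S (2 * m)))) in E3.
    rewrite (Hs (x (S (2 * m))) (x (2 * m)%nat)) in E3.
    assert (E6 := Hcons (2 * n)%nat). assert (E7 := Hcons (2 * m)%nat).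
    assert (E8 := Hkn (2 * n)%nat). assert (E9 := Hkn (2 * m)%nat).
    assert (k ^ (2 * n) * C <= C) by nra. assert (k ^ (2 * m) * C <= C) by nra.
    unfold Bd. lra. }
  assert (Hcau : cauchy_seq rho y).
  { apply NNPP; intro Hnc.
    assert (Hex : exists eps, 0 < eps /\ forall N, exists n m, (N <= n)%nat /\ (N <= m)%nat /\
              eps <= rho (y n) (y m)).
    { apply NNPP; intro H1. apply Hnc. intros eps He. apply NNPP; intro H2. apply H1.
      exists eps. split; auto. intro N. apply NNPP; intro H3. apply H2. exists N.
      intros n m Hn Hm. apply Rnot_le_lt. intro H4. apply H3. exists n, m. auto. }
    destruct Hex as [eps [He Hf]].
    assert (Hsig : forall N, {p : nat * nat | (N <= fst p)%nat /\ (N <= snd p)%nat /\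
                     eps <= rho (y (fst p)) (y (snd p))}).
    { intro N. apply constructive_indefinite_description.
      destruct (Hf N) as [n [m Hnm]]. exists (n, m). exact Hnm. }
    set (fa := fun N => fst (proj1_sig (Hsig N))).
    set (fb := fun N => snd (proj1_sig (Hsig N))).
    assert (Hfab : forall N, (N <= fa N)%nat /\ (N <= fb N)%nat /\ eps <= rho (y (fa N)) (y (fb N))).
    { intro N. unfold fa, fb. destruct (Hsig N) as [p Hp]. exact Hp. }
    assert (Hz := Hbuc (fun N => y (fa N)) (fun N => y (fb N)) (fun N => x (S (2 * fa N)))
       (fun N => proj1 (Hpar _)) (fun N => proj1 (Hpar _)) (fun N => proj2 (Hpar _))).
    assert (Hb1 : forall g : nat -> nat, bounded_sq rho (fun N => y (g N))).
    { intros g. exists Bd. intros; apply Hyb. }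
    specialize (Hz (Hb1 _) (Hb1 _)).
    assert (L1 : is_lim_seq (fun N => rho (y (fa N)) (x (S (2 * fa N)))) d).
    { apply (squeeze_lim _ d k C); [lra|]. intro N. unfold y.
      destruct (Hcons (2 * fa N)%nat) as [E1 E2]. split; auto.
      assert (k ^ (2 * fa N) <= k ^ N) by (apply pow_anti; [lra|]; destruct (Hfab N); lia).
      nra. }
    assert (L2 : is_lim_seq (fun N => rho (y (fb N)) (x (S (2 * fa N)))) d).
    { apply (squeeze_lim _ d k M); [lra|]. intro N. unfold y.
      destruct (Hfab N) as [F1 [F2 _]]. apply Hgen; auto. }
    specialize (Hz L1 L2). assert (Hz2 := proj1 (lim_eps _ 0) Hz). destruct (Hz2 eps He) as [N HN].
    specialize (HN N (le_n _)). destruct (Hfab N) as [_ [_ F3]].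
    rewrite Rminus_0_r, Rabs_right in HN; [lra|]. apply Rle_ge, H0. }
  destruct (Hcomp y Hcau) as [p Hp].
  assert (HAp : A p) by (apply (HAcl y p); [intro n; apply Hpar|exact Hp]).
  exists p. split; [exact HAp|]. split; [|exact Hp].
  apply Rle_antisym; [|apply Hd; auto].
  apply Rle_plus_epsilon. intros e He.
  destruct (Hp (e / 4) ltac:(lra)) as [N1 HN1].
  destruct (pow_small k C ltac:(lra) (e / 2) ltac:(lra)) as [N2 HN2].
  set (n := (N1 + N2)%nat).
  set (a := x (S (2 * n))).
  assert (Ha : B a) by apply Hpar.
  assert (Eta : T a = y (S n)).
  { unfold y, a. replace (2 * S n)%nat with (S (S (2 * n))) by lia. reflexivity. }
  assert (F1 := HN1 (S n) ltac:(unfold n; lia)).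
  assert (F2 := HN2 (S (2 * n)) ltac:(unfold n; lia)).
  assert (F3 := Htr p (T a) (T p)).
  assert (F4 : rho (T a) (T p) <= k * rho a p + (1 - k) * d).
  { apply Hc'. right. auto. }
  assert (F5 := Htr a (T a) p).
  destruct (Hcons (S (2 * n))) as [_ F6]. fold a in F6. change (x (S (S (2 * n)))) with (T a) in F6.
  rewrite Eta in *. rewrite (Hs p (y (S n))) in F3.
  assert (0 <= rho (y (S n)) p) by apply H0.
  nra.
Qed.

Theorem theorem31 (X : Type) (rho : X -> X -> R) (A B : X -> Prop) (T : X -> X)
  (Hmet : is_metric rho) (Hcomp : complete_metric rho)
  (HAne : nonempty A) (HBne : nonempty B)
  (HAcl : closed_in rho A) (HBcl : closed_in rho B)
  (HBUC : BUC rho A B) (Hcyc : cyclic_map A B T)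
  (Hk : exists k, 0 < k < 1 /\
     forall x y, A x -> B y ->
       rho (T x) (T y) <= k * rho x y + (1 - k) * distAB rho A B) :
  (exists x, A x /\ best_prox_point rho A B T x /\
     (forall x', A x' -> best_prox_point rho A B T x' -> x' = x) /\
     (forall x0, A x0 -> converges_to rho (fun n => Nat.iter (2 * n) T x0) x)) /\
  (exists y, B y /\ best_prox_point rho A B T y) /\
  (BUC rho B A ->
     forall y1 y2, B y1 -> best_prox_point rho A B T y1 ->
                   B y2 -> best_prox_point rho A B T y2 -> y1 = y2).
Proof.
  destruct Hk as [k [Hk Hc]]. destruct Hcyc as [HAB HBA].
  destruct (distAB_props rho A B Hmet HAne HBne) as [Hd0 Hd].
  assert (Hsym := distAB_sym rho A B Hmet).
  destruct Hmet as [H0 [Heq [Hs Htr]]] eqn:Hm.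
  assert (Huniq := uniq_lemma rho A B T k Hmet Hd HAB HBA Hk Hc HBUC).
  destruct HAne as [a0 Ha0].
  destruct (exist_lemma rho A B T k (distAB rho A B) Hmet Hcomp HAcl Hd0 Hd HAB HBA Hk Hc
     HBUC a0 Ha0) as [p [Hp [Hpd _]]].
  assert (Hfix : T (T p) = p).
  { apply (fix_lemma rho A B T k Hmet Hd HAB HBA Hk Hc HBUC); auto. }
  split; [|split].
  - exists p. split; [exact Hp|]. split; [exact Hpd|]. split.
    + intros x' Hx' Hx'd. apply Huniq; auto.
    + intros x0 Hx0.
      destruct (exist_lemma rho A B T k (distAB rho A B) Hmet Hcomp HAcl Hd0 Hd HAB HBA Hk Hc
         HBUC x0 Hx0) as [q [Hq [Hqd Hconv]]].
      replace p with q; auto.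
  - exists (T p). split; [auto|]. unfold best_prox_point. rewrite Hfix, Hs. exact Hpd.
  - intros HBUC' y1 y2 Hy1 Hy1d Hy2 Hy2d. unfold best_prox_point in *.
    rewrite <- Hsym in Hy1d, Hy2d.
    apply (uniq_lemma rho B A T k Hmet); auto.
    + intros u v Hu Hv. rewrite Hsym, Hs. apply Hd; auto.
    + intros u v Hu Hv. rewrite Hsym, Hs, (Hs u v). apply Hc; auto.
Qed.
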